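(* Let $p$ be an odd prime, $d\ge2$ an integer with $p\nmid d$, and $\overline{\mathbb{F}_p}$ an algebraic closure of $\mathbb{F}_p$. Let $\zeta_1,\dots,\zeta_{\phi(d)}$ be the primitive $d$-th roots of unity in $\overline{\mathbb{F}_p}$, and let $C$ be the $\phi(d)\times d$ matrix whose $c$-th row is $(1,\zeta_c,\zeta_c^2,\dots,\zeta_c^{d-1})$. Let $\chi_1,\dots,\chi_n$ be Dirichlet characters of conductor $d$, with values in $K=\mathbb{Q}_p(\chi_1,\dots,\chi_n)$; let $\pi$ be a prime of the valuation ring $\mathcal{O}_K$, and regard each $\chi_i$, after reduction modulo $\pi$, as a function $\mathbb{Z}/d\mathbb{Z}\to\mathbb{F}_q=\mathcal{O}_K/\pi\subseteq\overline{\mathbb{F}_p}$ (with $\chi_i(h)=0$ when $\gcd(h,d)>1$). Assume the $\chi_i$ are pairwise distinct modulo $\pi$, i.e. for $i\ne i'$ there is $a\in(\mathbb{Z}/d\mathbb{Z})^*$ with $\chi_i(a)\not\equiv\chi_{i'}(a)\pmod{\pi}$. Let $E$ be the $d\times n$ matrix with entry $\chi_i(h)$ in row $h$ ($h=0,\dots,d-1$) and column $i$, and let $B=CE$. Then: 1. $C$ has rank $\phi(d)$; 2. the set $\{(1,\zeta,\dots,\zeta^{d-1}):\ \zeta\in\overline{\mathbb{F}_p},\ \zeta^d=1,\ \zeta\text{ not a primitive }d\text{-th root of unity}\}$ is a basis of $\ker(C)\subseteq\overline{\mathbb{F}_p}^{\,d}$; 3. $\ker(B)=\{(0,\dots,0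)\}$.
   Context: $\phi$ denotes Euler's totient function. Matrices act on column vectors over $\overline{\mathbb{F}_p}$. *)

(* Defs.v *)
From HB Require Import structures.
From mathcomp Require Import all_boot all_order all_algebra all_field.
Set Implicit Arguments. Unset Strict Implicit. Unset Printing Implicit Defensive.
Import Order.TTheory GRing.Theory Num.Theory.
Local Open Scope ring_scope.

(* Dirichlet characters modulo d, with values in algC (algebraic numbers,
   which embed into an algebraic closure of Q_p), viewed as functions on nat:
   completely multiplicative, d-periodic, chi n = 0 iff gcd(n,d) > 1. *)
Definition dirichlet_char (d : nat) (chi : nat -> algC) : Prop :=
  [/\ forall m k, chi (m * k)%N = chi m * chi k,
      forall k, chi (k + d)%N = chi k &
      forall k, chi k != 0 <-> coprime k d].

Definition induced_modulus (d d1 : nat) (chi : nat -> algC) : Prop :=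
  (d1 %| d)%N /\
  forall a, coprime a d -> a = 1 %[mod d1] -> chi a = 1.

Definition has_conductor (d f : nat) (chi : nat -> algC) : Prop :=
  dirichlet_char d chi /\ induced_modulus d f chi /\
  forall d1, induced_modulus d d1 chi -> (f <= d1)%N.

(* Reduction modulo a prime above p: a ring homomorphism from the ring of
   algebraic integers to F (given as a function on algC, only constrained
   on algebraic integers). *)
Definition reduction_map (F : fieldType) (red : algC -> F) : Prop :=
  [/\ red 1 = 1,
      forall x y, x \in Aint -> y \in Aint -> red (x + y) = red x + red y &
      forall x y, x \in Aint -> y \in Aint -> red (x * y) = red x * red y].

Definition powcol (F : fieldType) (d : nat) (z : F) : 'cV[F]_d :=
  \col_(h < d) z ^+ h.

Definition Cmat (F : fieldType) (d : nat) (zs : seq F) : 'M[F]_(size zs, d) :=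
  \matrix_(c < size zs, h < d) zs`_c ^+ h.

Definition Emat (F : fieldType) (d n : nat) (red : algC -> F)
  (chi : 'I_n -> nat -> algC) : 'M[F]_(d, n) :=
  \matrix_(h < d, i < n) red (chi i h).

Definition mxker (F : fieldType) (m k : nat) (A : 'M[F]_(m, k)) :
  {vspace 'cV[F]_k} := lker (linfun (mulmx A)).

(* Main.v *)
Require Import Defs.
From HB Require Import structures.
From mathcomp Require Import all_boot all_order all_algebra all_field.
From mathcomp Require cyclic.
Import Order.TTheory GRing.Theory Num.Theory.
Local Open Scope ring_scope.

Set Implicit Arguments. Unset Strict Implicit. Unset Printing Implicit Defensive.


Lemma geom_sum (F : fieldType) d (u : F) : (0 < d)%N -> u ^+ d = 1 ->
  \sum_(h < d) u ^+ h = if u == 1 then d%:R else 0.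
Proof.
move=> d0 ud; case: eqP => [->|/eqP u1].
  by under eq_bigr do rewrite expr1n; rewrite sumr_const card_ord.
have := subrX1 u d; rewrite ud subrr => /esym/eqP; rewrite mulf_eq0 subr_eq0.
by rewrite (negbTE u1) => /eqP.
Qed.

Lemma ortho_sum (F : fieldType) d (u v : F) : (0 < d)%N -> u ^+ d = 1 -> v ^+ d = 1 ->
  \sum_(h < d) (u / v) ^+ h = if u == v then d%:R else 0.
Proof.
move=> d0 ud vd; have v0 : v != 0.
  by apply/eqP=> v0; move: vd; rewrite v0 expr0n gtn_eqF // => /eqP; rewrite eq_sym oner_eq0.
rewrite geom_sum //; last by rewrite exprMn exprVn ud vd invr1 mulr1.
congr (if _ then _ else _); apply/eqP/eqP => [h|->]; last by rewrite divff.
by rewrite -(divfK v0 u) h mul1r.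
Qed.

Section Red.
Variables (F : fieldType) (red : algC -> F).
Hypothesis Hred : reduction_map red.

Lemma red0 : red 0 = 0.
Proof.
case: Hred => _ Ha _; have := Ha 0 0 (rpred0 _) (rpred0 _).
by rewrite addr0 => /esym/eqP; rewrite -subr_eq0 addrK => /eqP.
Qed.

Lemma red_sum (I : Type) (r : seq I) (P : pred I) (G : I -> algC) :
  (forall i, G i \in Aint) ->
  red (\sum_(i <- r | P i) G i) = \sum_(i <- r | P i) red (G i).
Proof.
move=> HG; case: Hred => _ Ha _.
elim: r => [|x r IH]; first by rewrite !big_nil red0.
rewrite !big_cons; case: (P x) => //.
by rewrite Ha ?IH // rpred_sum.
Qed.

Lemma red_mul x y : x \in Aint -> y \in Aint -> red (x * y) = red x * red y.
Proof. by case: Hred => _ _; apply. Qed.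

Lemma red_exp x k : x \in Aint -> red (x ^+ k) = red x ^+ k.
Proof.
case: Hred => H1 _ Hm xA; elim: k => [|k IH]; first by rewrite !expr0.
by rewrite !exprS Hm ?IH // rpredX.
Qed.
End Red.

Section Chi.
Variables (d : nat) (chi : nat -> algC).
Hypothesis Hc : dirichlet_char d chi.

Lemma chi_mod k : chi (k %% d) = chi k.
Proof.
case: Hc => _ Hp _; rewrite {2}(divn_eq k d).
elim: (k %/ d)%N => [|q IH]; first by rewrite mul0n add0n.
by rewrite mulSn -addnA addnC Hp.
Qed.

Lemma chi1 : chi 1 = 1.
Proof.
case: Hc => Hm _ Hz; have : chi 1 != 0 by apply/Hz; rewrite coprime1n.
move=> c0; have e := Hm 1%N 1%N; rewrite muln1 in e.
by apply: (mulfI c0); rewrite mulr1 -e.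
Qed.

Lemma chiX a k : chi (a ^ k) = chi a ^+ k.
Proof.
case: Hc => Hm _ _; elim: k => [|k IH]; first by rewrite chi1.
by rewrite expnS Hm IH exprS.
Qed.

Lemma chi_Aint k : (0 < d)%N -> chi k \in Aint.
Proof.
move=> d0; case: Hc => _ _ Hz.
have [ck|nck] := boolP (coprime k d); last first.
  have : ~ (chi k != 0) by move/Hz; rewrite (negbTE nck).
  by move/negP; rewrite negbK => /eqP->.
apply: (@Aint_unity_root (totient d)); first by rewrite totient_gt0.
apply/unity_rootP; rewrite -chiX -chi_mod cyclic.Euler_exp_totient // chi_mod chi1 //.
Qed.
End Chi.



Lemma mul_mod_inj d b (i j : nat) : coprime b d -> (i < d)%N -> (j < d)%N ->
  ((b * i) %% d = (b * j) %% d)%N -> i = j.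
Proof.
move=> cb id jd.
wlog le_ij : i j id jd / (i <= j)%N.
  move=> IH e; case: (leqP i j) => h; first exact: IH.
  exact: (esym (IH j i jd id (ltnW h) (esym e))).
move=> e; apply/eqP; rewrite eqn_leq le_ij /=.
have : (b * j == b * i %[mod d]) by rewrite e.
rewrite eqn_mod_dvd ?leq_mul2l ?le_ij ?orbT // -mulnBr Gauss_dvdr; last by rewrite coprime_sym.
move=> dv; have : (j - i < d)%N by apply: leq_ltn_trans (leq_subr _ _) jd.
case: (j - i)%N dv (subnKC le_ij) => [|k] dv; first by rewrite addn0 => <-.
by move=> _ lt; have := dvdn_leq (ltn0Sn k) dv; rewrite leqNgt lt.
Qed.

Lemma gauss_vanish d chi (eps : algC) a :
  has_conductor d d chi -> d.-primitive_root eps -> ~~ coprime a d ->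
  \sum_(h < d) chi h * (eps ^+ a) ^+ h = 0.
Proof.
move=> [Hc [_ Hmin]] pe nca.
have d0 := prim_order_gt0 pe.
set w := eps ^+ a.
set g := gcdn a d; set d1 := (d %/ g)%N.
have g0 : (0 < g)%N by rewrite gcdn_gt0 d0 orbT.
have g1 : (1 < g)%N by rewrite ltn_neqAle eq_sym g0 andbT.
have d1d : (d1 < d)%N by apply: ltn_Pdiv.
have d1dv : (d1 %| d)%N by rewrite -[X in (_ %| X)%N](divnK (dvdn_gcdr a d)) dvdn_mulr.
have w1 : w ^+ d1 = 1 by apply: prim_expr_order; apply: exp_prim_root.
have wd : w ^+ d = 1 by rewrite /w exprAC (prim_expr_order pe) expr1n.
set G := fun h : nat => chi h * w ^+ h.
have Gmod k : G (k %% d)%N = G k by rewrite /G chi_mod // expr_mod.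
set S := \sum_(h < d) chi h * w ^+ h.
have [S0|Sn0] := eqVneq S 0; first by [].
exfalso.
suff : induced_modulus d d1 chi by move/Hmin; rewrite leqNgt d1d.
split=> // b cb b1.
have e : S = chi b * S.
  rewrite /S big_distrr /= (reindex_inj (h := fun h : 'I_d => Ordinal (ltn_pmod (b * h) d0))) /=; last first.
    by move=> i j /(congr1 val) /= /(mul_mod_inj cb (ltn_ord i) (ltn_ord j)) /val_inj.
  apply: eq_bigr => h _.
  have -> : chi (b * h %% d)%N * w ^+ (b * h %% d)%N = G (b * h)%N by rewrite -Gmod.
  rewrite /G; case: Hc => Hm _ _; rewrite Hm -mulrA; congr (_ * (_ * _)).
  by rewrite -(expr_mod _ w1) -modnMml b1 modnMml mul1n expr_mod.
have : (1 - chi b) * S = 0 by rewrite mulrBl mul1r -e subrr.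
by move/eqP; rewrite mulf_eq0 (negbTE Sn0) orbF subr_eq0 => /eqP <-.
Qed.



Lemma dedekind (F : fieldType) n (psi : 'I_n -> nat -> F)
  (H1 : forall i, psi i 1%N = 1)
  (Hm : forall i a h, psi i (a * h)%N = psi i a * psi i h)
  (Hd : forall i i', i != i' -> exists a, psi i a != psi i' a)
  (y : 'I_n -> F) : (forall h, \sum_i y i * psi i h = 0) -> forall i, y i = 0.
Proof.
suff: forall m (y : 'I_n -> F), leq #|[set i | y i != 0]| m ->
  (forall h, \sum_i y i * psi i h = 0) -> forall i, y i = 0 by apply.
elim=> [|m IH] {}y.
  rewrite leqn0 cards_eq0 => /eqP e _ i; apply/eqP; apply: contraT => yi.
  have : i \in [set i | y i != 0] by rewrite inE.
  by rewrite e inE.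
move=> hc rel.
case: (pickP [pred i | y i != 0]) => [j /= yj | none]; last first.
  by move=> i; have := none i; rewrite /= => /negbFE/eqP.
have yk0 : forall k, k != j -> y k = 0.
  move=> k kj; have [a ha] := Hd j k (negbT (introF eqP (fun e => negP kj (introT eqP (esym e))))).
  pose z := fun i => y i * (psi j a - psi i a).
  have zrel : forall h, \sum_i z i * psi i h = 0.
    move=> h.
    have -> : \sum_i z i * psi i h =
      psi j a * (\sum_i y i * psi i h) - \sum_i y i * psi i (a * h)%N.
      rewrite mulr_sumr -sumrB; apply: eq_bigr => i _; by rewrite Hm /z mulrBr mulrBl -!mulrA [psi j a * (y i * _)]mulrCA.
    by rewrite !rel mulr0 subrr.
  have zc : leq #|[set i | z i != 0]| m.
    have sub : [set i | z i != 0] \subset [set i | y i != 0] :\ j.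
      apply/subsetP => i; rewrite !inE /z mulf_eq0 negb_or => /andP[yi].
      by rewrite yi andbT; apply: contra => /eqP ->; rewrite subrr.
    apply: leq_trans (subset_leq_card sub) _.
    have := cardsD1 j [set i | y i != 0]; rewrite inE yj add1n => e.
    by rewrite -ltnS -e.
  have := IH z zc zrel k; rewrite /z => /eqP; rewrite mulf_eq0 subr_eq0 (negbTE ha) orbF.
  by move/eqP.
have yj0 : y j = 0.
  have := rel 1%N; rewrite (bigD1 j) //= big1 => [|i ij]; last by rewrite yk0 ?mul0r.
  by rewrite addr0 H1 mulr1.
by move=> i; case: (eqVneq i j) => [->|/yk0].
Qed.



Lemma prim_inv (F : fieldType) d (z : F) : d.-primitive_root z -> d.-primitive_root z^-1.
Proof.
move=> pz; have d0 := prim_order_gt0 pz.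
have z0 : z != 0 by rewrite (prim_root_eq0 pz) -lt0n.
have -> : z^-1 = z ^+ d.-1.
  apply: (mulfI z0); rewrite mulfV // -exprS prednK // prim_expr_order //.
by rewrite prim_root_exp_coprime // -{2}(prednK d0) coprimenS.
Qed.

Lemma eta_eq (F : fieldType) d (eta : F) (h m : 'I_d) : d.-primitive_root eta ->
  (eta ^+ h == eta ^+ m) = (h == m).
Proof. by move=> pe; rewrite (eq_prim_root_expr pe) !modn_small. Qed.

Lemma dft_inv (F : fieldType) d (eta : F) (f : 'I_d -> F) (m : 'I_d) :
  d.-primitive_root eta ->
  \sum_(k < d) (\sum_(h < d) (eta ^+ k) ^+ h * f h) * ((eta ^+ k)^-1) ^+ m = d%:R * f m.
Proof.
move=> pe; have d0 := prim_order_gt0 pe.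
have ed := prim_expr_order pe.
under eq_bigr do rewrite mulr_suml.
rewrite exchange_big /=.
have -> : \sum_(h < d) \sum_(k < d) (eta ^+ k) ^+ h * f h * (eta ^+ k)^-1 ^+ m =
   \sum_(h < d) f h * \sum_(k < d) (eta ^+ h / eta ^+ m) ^+ k.
  apply: eq_bigr => h _; rewrite mulr_sumr; apply: eq_bigr => k _.
  rewrite mulrAC mulrC; congr (_ * _).
  by rewrite exprMn !exprVn -!exprM mulnC [(m * k)%N]mulnC.
have ek (k : nat) : (eta ^+ k) ^+ d = 1 by rewrite exprAC ed expr1n.
rewrite (bigD1 m) //= ortho_sum // eqxx big1 => [|h hm]; last first.
  by rewrite ortho_sum // eta_eq // (negbTE hm) mulr0.
by rewrite addr0 mulrC.
Qed.


Unset Implicit Arguments. Set Strict Implicit.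

Theorem lemma4 (p : nat) (d : nat) (F : closedFieldType)
  (Hp : prime p) (Hodd : odd p) (Hd : (2 <= d)%N) (Hpd : ~~ (p %| d)%N)
  (HcharF : p \in [pchar F])
  (Halg : forall x : F, exists k : nat, (0 < k)%N /\ x ^+ (p ^ k) = x)
  (zs : seq F) (Hzs_uniq : uniq zs)
  (Hzs : forall x : F, x \in zs <-> d.-primitive_root x)
  (ws : seq F) (Hws_uniq : uniq ws)
  (Hws : forall x : F, x \in ws <-> (x ^+ d = 1 /\ ~~ d.-primitive_root x))
  (n : nat) (chi : 'I_n -> nat -> algC)
  (Hchi : forall i, has_conductor d d (chi i))
  (red : algC -> F) (Hred : reduction_map red)
  (Hdist : forall i i' : 'I_n, i != i' ->
     exists a : nat, coprime a d /\ red (chi i a) != red (chi i' a)) :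
  [/\ \rank (Cmat d zs) = totient d,
      basis_of (mxker (Cmat d zs)) [seq powcol d w | w <- ws] &
      mxker (Cmat d zs *m Emat d red chi) = 0%VS].
Proof.
have d0 : (0 < d)%N by apply: leq_trans Hd.
have dF : (d%:R : F) != 0 by rewrite -(dvdn_pcharf HcharF).
have [eps peps] := C_prim_root_exists d0.
have epsA : eps \in Aint := Aint_prim_root peps.
have red1 : red 1 = 1 by case: Hred.
set eta := red eps.
have etad : eta ^+ d = 1 by rewrite /eta -(red_exp Hred) // prim_expr_order.
have peta : d.-primitive_root eta.
  have [m pm mdv] := prim_order_exists d0 etad.
  have m0 := prim_order_gt0 pm.
  have [e|mnd] := eqVneq m d; first by rewrite -e.
  exfalso; have mltd : (m < d)%N by rewrite ltn_neqAle mnd dvdn_leq.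
  have em1 : eps ^+ m != 1 by rewrite -(prim_order_dvd peps) gtnNdvd.
  have emd : (eps ^+ m) ^+ d = 1 by rewrite exprAC (prim_expr_order peps) expr1n.
  have := geom_sum d0 emd; rewrite (negbTE em1) => /(congr1 red).
  rewrite (red0 Hred) (red_sum Hred); last by move=> i; rewrite !rpredX.
  under eq_bigr do rewrite (red_exp Hred) ?rpredX // (red_exp Hred) // (prim_expr_order pm) expr1n.
  by rewrite sumr_const card_ord => /eqP; rewrite (negbTE dF).
have rootP : forall x : F, x ^+ d = 1 -> exists k : 'I_d, x = eta ^+ k.
  by move=> x xd; have [k ->] := prim_rootP peta xd; exists k.
have chiA : forall i h, chi i h \in Aint.
  by move=> i h; apply: (chi_Aint (Hchi i).1).
have van : forall i (u : F), u ^+ d = 1 -> ~~ d.-primitive_root u ->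
    \sum_(h < d) red (chi i h) * u ^+ h = 0.
  move=> i u ud npu; have [k ek] := rootP u ud; subst u.
  rewrite prim_root_exp_coprime // in npu.
  have := gauss_vanish (Hchi i) peps npu => /(congr1 red).
  rewrite (red0 Hred) (red_sum Hred) => [e|h]; last by rewrite rpredM ?rpredX.
  rewrite -[RHS]e.
  apply: eq_bigr => h _.
  by rewrite (red_mul Hred) ?rpredX // (red_exp Hred) ?rpredX // (red_exp Hred).
have zs_root : forall z, z \in zs -> z ^+ d = 1 by move=> z /Hzs /prim_expr_order.
have ws_root : forall w, w \in ws -> w ^+ d = 1 by move=> w /Hws [].
set rts := [seq eta ^+ (val k) | k <- enum 'I_d].
have rts_perm : perm_eq (zs ++ ws) rts.
  apply: uniq_perm.
  - rewrite cat_uniq Hzs_uniq Hws_uniq andbT /=.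
    apply/hasPn => w /Hws [_ npw]; apply/negP => /Hzs pw; by rewrite pw in npw.
  - by rewrite map_inj_uniq ?enum_uniq // => k1 k2 /eqP; rewrite eta_eq // => /eqP.
  - move=> x; rewrite mem_cat; apply/idP/idP.
      by case/orP => [/zs_root | /ws_root] /rootP [k ->]; apply: map_f; rewrite mem_enum.
    case/mapP => k _ ->; case: (boolP (d.-primitive_root (eta ^+ k))) => pk.
      by apply/orP; left; apply/Hzs.
    by apply/orP; right; apply/Hws; rewrite exprAC etad expr1n.
have sum_rts : forall G : F -> F, \sum_(u <- zs ++ ws) G u = \sum_(k < d) G (eta ^+ k).
  by move=> G; rewrite (perm_big _ rts_perm) big_map big_enum.
have szs : size zs = totient d.
  have e1 : size zs = count (fun u => d.-primitive_root u) (zs ++ ws).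
    rewrite count_cat -[LHS]addn0 -(count_predT zs); congr (_ + _)%N.
      by apply: eq_in_count => z /Hzs.
    rewrite -(count_pred0 ws); apply: eq_in_count => w /Hws [_ /negbTE ->] //.
  rewrite e1 (permP rts_perm) count_map.
  rewrite totient_count_coprime big_mkord -sum1_count big_mkcond /= big_enum /=.
  apply: eq_bigr => k _; rewrite /= prim_root_exp_coprime // coprime_sym; by case: coprime.
have rankC : \rank (Cmat d zs) = size zs.
  pose Dm := \matrix_(h < d, c < size zs) ((zs`_c)^-1 ^+ h / d%:R).
  have CD : Cmat d zs *m Dm = 1%:M.
    apply/matrixP => c c'; rewrite !mxE.
    under eq_bigr do rewrite !mxE mulrA -exprMn.
    rewrite -mulr_suml ortho_sum // ?zs_root ?mem_nth //.
    case: (eqVneq c c') => [->|ne]; first by rewrite eqxx divff.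
    have ne' : (val c != val c') by [].
    rewrite nth_uniq // (negbTE ne') mul0r //.
  apply/eqP; rewrite eqn_leq rank_leq_row /= -{1}(mxrank1 F (size zs)) -CD mxrankM_maxl //.
have root_nz : forall u : F, u ^+ d = 1 -> u != 0.
  move=> u ud; apply/eqP => u0; move: ud; rewrite u0 expr0n gtn_eqF //.
  by move/eqP; rewrite eq_sym oner_eq0.
have ws_inv : forall w, w \in ws -> w^-1 \in ws.
  move=> w /Hws [wd npw]; apply/Hws; split; first by rewrite exprVn wd invr1.
  by apply: contra npw => /prim_inv; rewrite invrK.
split; first by rewrite rankC.
  rewrite /basis_of; apply/andP; split.
    rewrite eqEsubv; apply/andP; split.
      apply/span_subvP => v /mapP [w ww ->]; rewrite memv_ker lfunE /=.
      apply/eqP/matrixP => c z; rewrite !mxE.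
      under eq_bigr do rewrite !mxE -exprMn.
      have zc : zs`_c \in zs by rewrite mem_nth.
      rewrite geom_sum //; last by rewrite exprMn zs_root // ws_root // mulr1.
      case: eqP => // e; exfalso.
      have ew : w = (zs`_c)^-1 by rewrite -[RHS]mulr1 -e mulKf // root_nz // zs_root.
      move: ww => /Hws [_]; rewrite ew; move/negP; apply; apply: prim_inv; exact/Hzs.
    apply/subvP => v; rewrite memv_ker lfunE /= => /eqP Cv.
    have Hv : forall z, z \in zs -> \sum_(h < d) z ^+ h * v h 0 = 0.
      move=> z zz; have ci : (index z zs < size zs)%N by rewrite index_mem.
      move/matrixP: Cv => /(_ (Ordinal ci) 0); rewrite !mxE.
      under eq_bigr do rewrite mxE; by rewrite nth_index.
    have key : v = \sum_(w <- ws) ((\sum_(h < d) w ^+ h * v h 0) / d%:R) *: powcol d w^-1.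
      apply/matrixP => m z0; rewrite ord1 {z0} summxE.
      under eq_bigr do rewrite !mxE.
      have e := sum_rts (fun u => (\sum_(h < d) u ^+ h * v h 0) * (u^-1) ^+ m).
      rewrite dft_inv // big_cat /= big1_seq ?add0r in e; last first.
        by move=> z /andP [_ zz]; rewrite Hv // mul0r.
      rewrite -[LHS](mulKf dF) -e mulr_sumr; apply: eq_bigr => w _.
      by rewrite mulrA [_^-1 * _]mulrC.
    rewrite key big_seq; apply: rpred_sum => w ww; apply: rpredZ; apply: memv_span.
    by apply: map_f; apply: ws_inv.
  apply/(@freeP _ _ _ (in_tuple [seq powcol d w | w <- ws])) => k Hk j.
  set X := [seq powcol d w | w <- ws] in k Hk j *.
  have sX : size X = size ws by rewrite size_map.
  have Xi : forall i : 'I_(size X), X`_i = powcol d (ws`_i).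
    by move=> i; rewrite (nth_map 0) // -sX.
  have wsi : forall i : 'I_(size X), ws`_i \in ws by move=> i; rewrite mem_nth // -sX.
  have Hm : forall m : 'I_d, \sum_(i < size X) k i * (ws`_i) ^+ m = 0.
    move=> m; move/matrixP: Hk => /(_ m 0); rewrite summxE !mxE.
    by under eq_bigr do rewrite Xi !mxE.
  have : \sum_(m < d) (\sum_(i < size X) k i * (ws`_i) ^+ m) * ((ws`_j)^-1) ^+ m = 0.
    by rewrite big1 // => m _; rewrite Hm mul0r.
  under eq_bigr do rewrite mulr_suml.
  rewrite exchange_big /=.
  have -> : \sum_(i < size X) \sum_(m < d) k i * ws`_i ^+ m * (ws`_j)^-1 ^+ m =
     \sum_(i < size X) k i * (if i == j then d%:R else 0).
    apply: eq_bigr => i _.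
    under eq_bigr do rewrite -mulrA -exprMn.
    rewrite -mulr_sumr ortho_sum ?ws_root //.
    case: (eqVneq i j) => [->|ne]; first by rewrite eqxx.
    have ne' : (val i != val j) by [].
    by rewrite nth_uniq -?sX // (negbTE ne').
  rewrite (bigD1 j) //= eqxx big1 ?addr0 => [|i /negbTE ->]; last by rewrite mulr0.
  by move/eqP; rewrite mulf_eq0 (negbTE dF) orbF => /eqP.
apply/eqP; rewrite -subv0; apply/subvP => x; rewrite memv_ker lfunE memv0 /= => /eqP Bx.
have Ce : forall (c : 'I_(size zs)) (h : 'I_d), Cmat d zs c h = zs`_c ^+ h.
  by move=> c h; rewrite /Cmat mxE.
pose f := fun h : 'I_d => (Emat d red chi *m x) h 0.
have rel : forall u : F, u ^+ d = 1 -> \sum_(h < d) u ^+ h * f h = 0.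
  move=> u ud; case: (boolP (d.-primitive_root u)) => pu.
    have uz : u \in zs by apply/Hzs.
    have ci : (index u zs < size zs)%N by rewrite index_mem.
    have e := congr1 (fun M : 'M[F]_(size zs, 1) => M (Ordinal ci) 0) Bx; rewrite /= -mulmxA [LHS]mxE [RHS]mxE in e.
    by rewrite -[RHS]e; apply: eq_bigr => h _; rewrite Ce nth_index.
  rewrite /f; under eq_bigr do rewrite mxE mulr_sumr.
  rewrite exchange_big /=; apply: big1 => i _.
  rewrite -[RHS](mulr0 (x i 0)) -[in RHS](van i u ud pu) mulr_sumr; apply: eq_bigr => h _.
  rewrite /Emat mxE mulrC mulrA; congr (_ * _); exact: mulrC.
have f0 : forall m, f m = 0.
  move=> m; have := dft_inv f m peta; rewrite big1 => [|k _]; last first.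
    by rewrite rel ?mul0r // exprAC etad expr1n.
  by move/esym/eqP; rewrite mulf_eq0 (negbTE dF) /= => /eqP.
apply/eqP/matrixP => i z0; rewrite ord1 mxE.
have H1' : forall j, red (chi j 1%N) = 1 by move=> j; rewrite (chi1 (Hchi j).1) red1.
have Hm' : forall j a h, red (chi j (a * h)%N) = red (chi j a) * red (chi j h).
  by move=> j a h; case: (Hchi j).1 => Hm _ _; rewrite Hm (red_mul Hred).
have Hd' : forall j j' : 'I_n, j != j' -> exists a, red (chi j a) != red (chi j' a).
  by move=> j j' /Hdist [a [_ ha]]; exists a.
apply: (@dedekind F n (fun i h => red (chi i h)) H1' Hm' Hd' (fun i => x i 0)).
move=> h; have := f0 (Ordinal (ltn_pmod h d0)); rewrite /f mxE => e; rewrite -[RHS]e.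
  apply: eq_bigr => j _; rewrite /Emat mxE /= (chi_mod (Hchi j).1) mulrC //.
Qed.
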